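(* Let $X$ be a bounded chain and $H\colon X^*\to X\cup\{\varepsilon\}$ an $\varepsilon$-standard operation. The following are equivalent. (i) (a) $H$ is associative; (b) $H_2(H_1(x),H_1(x))=H_1(x)$ for every $x\in X$; (c) $H_1$ and $H_2$ are nondecreasing in each argument; (d) the sets $H_1(X)$, $H_2(X,z)=\{H_2(x,z):x\in X\}$ and $H_2(z,X)=\{H_2(z,x):x\in X\}$ are convex for every $z\in X$. (ii) (a) $H$ is associative; (b) $H$ is range-idempotent; (c) for every $n\geqslant 1$, $H_n$ is nondecreasing in each argument; (d) for every $n\geqslant 1$, every $0\leqslant i\leqslant n-1$, every $\mathbf{y}\in X^i$ and $\mathbf{z}\in X^{n-1-i}$, the set $\{H_n(\mathbf{y},x,\mathbf{z}):x\in X\}$ is convex. (iii) There exist $a,b,c,d\in X$ with $a\leqslant c\wedge d$ and $c\vee d\leqslant b$ such that for every $n\geqslant 1$, $$H_n(x_1,\ldots,x_n)=\mathrm{med}\Big(a,\,(c\wedge x_1)\vee\mathrm{med}\Big(\bigwedge_{i=1}^n x_i,\,c\wedge d,\,\bigvee_{i=1}^n x_i\Big)\vee(d\wedge x_n),\,b\Big).$$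
   Context: $X^*=\bigcup_{n\geqslant 0}X^n$ is the set of finite tuples over $X$, $X^0=\{\varepsilon\}$ with $\varepsilon\notin X$ the empty tuple; $H(\mathbf{x},\mathbf{y})$ denotes $H$ applied to the concatenation, concatenation with $\varepsilon$ leaving tuples unchanged. $H_n=H|_{X^n}$, $H^{\flat}=H|_{X^*\setminus\{\varepsilon\}}$. $H$ is $\varepsilon$-standard if $H(\varepsilon)=\varepsilon$ and $H(\mathbf{x})\neq\varepsilon$ for $\mathbf{x}\neq\varepsilon$. $H$ is associative if $H(\mathbf{x},\mathbf{y},\mathbf{z})=H(\mathbf{x},H(\mathbf{y}),\mathbf{z})$ for all tuples (a value $\varepsilon$ treated as the empty tuple). $H$ is range-idempotent if $H(x,\ldots,x)=x$ ($k$ copies) for every $x\in\mathrm{ran}(H^{\flat})$ and every $k\geqslant 1$. In the chain $X$, $\wedge$ and $\vee$ denote min and max, and $\mathrm{med}(x,y,z)=(x\vee y)\wedge(y\vee z)\wedge(z\vee x)$. A subset $S$ of a chain is convex if $s,s'\in S$ and $s<t<s'$ imply $t\in S$. *)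

(* Defs.v *)
From mathcomp Require Import all_boot all_order.
Set Implicit Arguments. Unset Strict Implicit. Unset Printing Implicit Defensive.
Import Order.TTheory.
Local Open Scope order_scope.

(* Tuples over X are [seq X]; the empty tuple epsilon is [::].
   An operation H : X^* -> X \cup {epsilon} is modelled as [seq X -> option X],
   where [None] stands for the value epsilon. *)

Definition otup (T : Type) (o : option T) : seq T :=
  if o is Some v then [:: v] else [::].

Definition eps_standard (T : Type) (H : seq T -> option T) : Prop :=
  H [::] = None /\ forall s : seq T, s <> [::] -> H s <> None.

Definition associative_op (T : Type) (H : seq T -> option T) : Prop :=
  forall x y z : seq T, H (x ++ y ++ z) = H (x ++ otup (H y) ++ z).

Definition range_idempotent (T : Type) (H : seq T -> option T) : Prop :=
  forall v : T, (exists s : seq T, s <> [::] /\ H s = Some v) ->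
  forall k : nat, 0 < k -> H (nseq k v) = Some v.

Definition convex_set (d : Order.disp_t) (X : orderType d) (S : X -> Prop) : Prop :=
  forall s s' t : X, S s -> S s' -> s < t -> t < s' -> S t.

Definition nondecr_all (d : Order.disp_t) (X : orderType d) (H : seq X -> option X) : Prop :=
  forall (y z : seq X) (x x' v v' : X), x <= x' ->
    H (y ++ x :: z) = Some v -> H (y ++ x' :: z) = Some v' -> v <= v'.

Definition section_set (X : Type) (H : seq X -> option X) (y z : seq X) : X -> Prop :=
  fun t => exists x : X, H (y ++ x :: z) = Some t.

Definition med (d : Order.disp_t) (X : orderType d) (x y z : X) : X :=
  (x `|` y) `&` (y `|` z) `&` (z `|` x).

Definition condition_i (d : Order.disp_t) (X : tbOrderType d) (H : seq X -> option X) : Prop :=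
  [/\ associative_op H,
      (forall x v : X, H [:: x] = Some v -> H [:: v; v] = Some v),
      [/\ (forall x x' v v' : X, x <= x' -> H [:: x] = Some v -> H [:: x'] = Some v' -> v <= v'),
          (forall x x' z v v' : X, x <= x' -> H [:: x; z] = Some v -> H [:: x'; z] = Some v' -> v <= v') &
          (forall x x' z v v' : X, x <= x' -> H [:: z; x] = Some v -> H [:: z; x'] = Some v' -> v <= v')] &
      [/\ convex_set (section_set H [::] [::]),
          (forall z : X, convex_set (section_set H [::] [:: z])) &
          (forall z : X, convex_set (section_set H [:: z] [::]))]].

Definition condition_ii (d : Order.disp_t) (X : tbOrderType d) (H : seq X -> option X) : Prop :=
  [/\ associative_op H, range_idempotent H, nondecr_all H &
      forall y z : seq X, convex_set (section_set H y z)].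

Definition condition_iii (d : Order.disp_t) (X : tbOrderType d) (H : seq X -> option X) : Prop :=
  exists a b c e : X, [/\ a <= c `&` e, c `|` e <= b &
    forall (x1 : X) (t : seq X),
      H (x1 :: t) = Some (med a
        ((c `&` x1) `|` med (\meet_(x <- x1 :: t) x) (c `&` e) (\join_(x <- x1 :: t) x)
                     `|` (e `&` last x1 t)) b)].

(* Main.v *)
Require Import Defs.
From mathcomp Require Import all_boot all_order.
Set Implicit Arguments. Unset Strict Implicit. Unset Printing Implicit Defensive.
Import Order.TTheory.
Local Open Scope order_scope.


Section Rank.
Variables (d : Order.disp_t) (X : orderType d) (s : seq X).
Definition rk (x : X) : nat := count (fun y => y < x) s.

Lemma rk_mono x y : x <= y -> (rk x <= rk y)%N.
Proof. move=> xy; apply: sub_count => z /= zx; exact: lt_le_trans zx xy. Qed.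

Lemma rk_strict x y : y \in s -> y < x -> (rk y < rk x)%N.
Proof.
rewrite /rk; elim: s => //= z t IH; rewrite inE => /orP [/eqP <-|yt] yx.
  rewrite ltxx yx /= add0n add1n ltnS; apply: sub_count => w /= wy.
  exact: lt_trans wy yx.
have := IH yt yx; case: (ltP z y) => zy.
  by rewrite (lt_trans zy yx).
by case: (z < x); rewrite /= ?add0n ?add1n // => h; apply: ltnW.
Qed.

Lemma rk_le x y : x \in s -> y \in s -> (x <= y) = (rk x <= rk y)%N.
Proof.
move=> xs ys; apply/idP/idP; first exact: rk_mono.
by case: (leP x y) => // yx; move: (rk_strict ys yx); rewrite ltnNge => /negbTE ->.
Qed.

Lemma rk_inj x y : x \in s -> y \in s -> rk x = rk y -> x = y.
Proof.
move=> xs ys e; apply/eqP; rewrite eq_le (rk_le xs ys) (rk_le ys xs) e leqnn //.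
Qed.

Lemma rk_meet x y : rk (x `&` y) = minn (rk x) (rk y).
Proof.
case: (leP x y) => xy.
  by apply/esym/minn_idPl/rk_mono.
by apply/esym/minn_idPr/rk_mono/ltW.
Qed.

Lemma rk_join x y : rk (x `|` y) = maxn (rk x) (rk y).
Proof.
case: (leP x y) => xy.
  by apply/esym/maxn_idPr/rk_mono.
by apply/esym/maxn_idPl/rk_mono/ltW.
Qed.

Lemma memI x y : x \in s -> y \in s -> x `&` y \in s.
Proof. by case: (leP x y). Qed.
Lemma memU x y : x \in s -> y \in s -> x `|` y \in s.
Proof. by case: (leP x y). Qed.
End Rank.
Arguments rk : simpl never.


Inductive lterm := LV of nat | LM of lterm & lterm | LJ of lterm & lterm.

Fixpoint ev (T : Type) (mn mx : T -> T -> T) (e : nat -> T) (t : lterm) : T :=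
  match t with
  | LV i => e i
  | LM a b => mn (ev mn mx e a) (ev mn mx e b)
  | LJ a b => mx (ev mn mx e a) (ev mn mx e b)
  end.

Fixpoint assigns (n k : nat) : seq (seq nat) :=
  if k is k'.+1 then flatten (map (fun i => map (cons i) (assigns n k')) (iota 0 n))
  else [:: [::]].

Lemma assignsP n k w : size w = k -> all (fun i => (i < n)%N) w -> w \in assigns n k.
Proof.
elim: k w => [|k IH] [|i w] //= [sw] /andP [ilt wa].
apply/flatten_mapP; exists i; first by rewrite mem_iota.
by rewrite mem_map; [apply: IH | move=> ? ? []].
Qed.

Definition nenv (v : seq nat) := fun i => nth (head 0%N v) v i.

Definition check (n : nat) (hs : seq (lterm * lterm)) (c : bool * lterm * lterm) : bool :=
  all (fun v => let e := nenv v in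
     (all (fun p => (ev minn maxn e p.1 <= ev minn maxn e p.2)%N) hs) ==>
     (if c.1.1 then ev minn maxn e c.1.2 == ev minn maxn e c.2
      else (ev minn maxn e c.1.2 <= ev minn maxn e c.2)%N)) (assigns n n).

Section Sound.
Variables (d : Order.disp_t) (X : orderType d).

Definition evX (e : nat -> X) := ev (@Order.meet _ X) (@Order.join _ X) e.

Definition cinterp (e : nat -> X) (c : bool * lterm * lterm) : Prop :=
  if c.1.1 then evX e c.1.2 = evX e c.2 else evX e c.1.2 <= evX e c.2.

Definition interp (e : nat -> X) (hs : seq (lterm * lterm)) c : Prop :=
  foldr (fun p P => evX e p.1 <= evX e p.2 -> P) (cinterp e c) hs.

Variables (x0 : X) (r : seq X).
Let s := x0 :: r.
Let e := nth x0 s.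
Let v := map (rk s) s.

Lemma e_mem i : e i \in s.
Proof.
rewrite /e; case: (ltnP i (size s)) => hi; first exact: mem_nth.
by rewrite nth_default // inE eqxx.
Qed.

Lemma ev_mem t : evX e t \in s.
Proof. elim: t => [i|a iha b ihb|a iha b ihb] /=; [exact: e_mem|exact: memI|exact: memU]. Qed.

Lemma rk_ev t : rk s (evX e t) = ev minn maxn (nenv v) t.
Proof.
rewrite /evX; elim: t => [i|a iha b ihb|a iha b ihb] /=; last 2 first.
- by rewrite rk_meet iha ihb.
- by rewrite rk_join iha ihb.
rewrite /nenv /v /e; case: (ltnP i (size s)) => hi.
  by rewrite (nth_map x0).
by rewrite !nth_default ?size_map.
Qed.

Lemma rk_lt_size x : x \in s -> (rk s x < size s)%N.
Proof.
move=> xs; rewrite /rk -(count_predC (fun y => y < x) s) -addn1 leq_add2l.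
by rewrite -has_count; apply/hasP; exists x => //=; rewrite ltxx.
Qed.

Lemma lat_sound hs c : check (size s) hs c -> interp e hs c.
Proof.
rewrite /check => /allP /(_ v) H.
have {H}: (all (fun p => (ev minn maxn (nenv v) p.1 <= ev minn maxn (nenv v) p.2)%N) hs) ==>
     (if c.1.1 then ev minn maxn (nenv v) c.1.2 == ev minn maxn (nenv v) c.2
      else (ev minn maxn (nenv v) c.1.2 <= ev minn maxn (nenv v) c.2)%N).
  apply: H; apply: assignsP; first by rewrite size_map.
  by apply/allP => y /mapP [x xs ->]; apply: rk_lt_size.
elim: hs => [|p hs IH] /=.
  rewrite /cinterp -!rk_ev; case: c.1.1 => /=.
    by move/eqP; apply: rk_inj; apply: ev_mem.
  by rewrite -(rk_le (ev_mem _) (ev_mem _)).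
move=> H hp; apply: IH; apply/implyP => ha; apply: (implyP H); rewrite ha andbT.
by rewrite -!rk_ev -(rk_le (ev_mem _) (ev_mem _)).
Qed.
End Sound.

Ltac lidx x l := match l with
 | x :: _ => constr:(0%N)
 | _ :: ?r => let n := lidx x r in constr:(S n) end.

Ltac lreify l t := match t with
 | ?a `&` ?b => let ra := lreify l a in let rb := lreify l b in constr:(LM ra rb)
 | ?a `|` ?b => let ra := lreify l a in let rb := lreify l b in constr:(LJ ra rb)
 | _ => let n := lidx t l in constr:(LV n) end.

Ltac lreifyG l G := match G with
 | is_true (?p <= ?q) -> ?G' => let rp := lreify l p in let rq := lreify l q in
      let r := lreifyG l G' in
      match r with (?hs, ?c) => constr:(((rp, rq) :: hs, c)) end
 | ?a = ?b => let ra := lreify l a in let rb := lreify l b in constr:(([::] : seq (lterm * lterm), (true, ra, rb)))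
 | is_true (?a <= ?b) => let ra := lreify l a in let rb := lreify l b in constr:(([::] : seq (lterm * lterm), (false, ra, rb)))
 end.

Ltac latsolve l := rewrite ?/med; match goal with |- ?G =>
  let r := lreifyG l G in match r with (?hs, ?c) =>
  match l with ?x0 :: ?rr =>
  exact (@lat_sound _ _ x0 rr hs c ltac:(vm_compute; reflexivity)) end end end.


Section Lat.
Variables (d : Order.disp_t) (X : tbOrderType d).
Implicit Types (a b c e x y u v p q w : X).

Definition B c e x y := (c `&` x) `|` (x `&` y) `|` (e `&` y).
Definition Cl a b x := med a x b.

Lemma Bassoc c e x y z : B c e (B c e x y) z = B c e x (B c e y z).
Proof. rewrite /B. latsolve [:: c; e; x; y; z]. Qed.

Lemma Bxx c e x : B c e x x = x.
Proof. rewrite /B. latsolve [:: c; e; x]. Qed.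

Lemma Grcons c e f l m M y : m <= f -> f <= M -> m <= l -> l <= M ->
  (c `&` f) `|` med (m `&` y) (c `&` e) (M `|` y) `|` (e `&` y) =
  B c e ((c `&` f) `|` med m (c `&` e) M `|` (e `&` l)) y.
Proof. rewrite /B. latsolve [:: c; e; f; l; m; M; y]. Qed.

Lemma G1 c e x : (c `&` x) `|` med x (c `&` e) x `|` (e `&` x) = x.
Proof. latsolve [:: c; e; x]. Qed.

Lemma CB_l a b c e u v : a <= c -> c <= b -> a <= e -> e <= b ->
  Cl a b (B c e (Cl a b u) v) = Cl a b (B c e u v).
Proof. rewrite /Cl /B. latsolve [:: a; b; c; e; u; v]. Qed.

Lemma CB_r a b c e u v : a <= c -> c <= b -> a <= e -> e <= b ->
  Cl a b (B c e u (Cl a b v)) = Cl a b (B c e u v).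
Proof. rewrite /Cl /B. latsolve [:: a; b; c; e; u; v]. Qed.

Lemma CC a b u : a <= b -> Cl a b (Cl a b u) = Cl a b u.
Proof. rewrite /Cl. latsolve [:: a; b; u]. Qed.

Lemma B_med_l c e p q x v : p <= q -> B c e (med p x q) v = med (B c e p v) x (B c e q v).
Proof. rewrite /B. latsolve [:: c; e; p; q; x; v]. Qed.

Lemma B_med_r c e p q x v : p <= q -> B c e v (med p x q) = med (B c e v p) x (B c e v q).
Proof. rewrite /B. latsolve [:: c; e; p; q; x; v]. Qed.

Lemma C_med a b p q x : a <= b -> p <= q -> Cl a b (med p x q) = med (Cl a b p) x (Cl a b q).
Proof. rewrite /Cl. latsolve [:: a; b; p; q; x]. Qed.

Lemma B_mono_l c e p q v : p <= q -> B c e p v <= B c e q v.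
Proof. rewrite /B. latsolve [:: c; e; p; q; v]. Qed.
Lemma B_mono_r c e p q v : p <= q -> B c e v p <= B c e v q.
Proof. rewrite /B. latsolve [:: c; e; p; q; v]. Qed.
Lemma C_mono a b p q : p <= q -> Cl a b p <= Cl a b q.
Proof. rewrite /Cl. latsolve [:: a; b; p; q]. Qed.

Lemma med_lo p q x : p <= q -> p <= med p x q.
Proof. latsolve [:: p; q; x]. Qed.
Lemma med_hi p q x : p <= q -> med p x q <= q.
Proof. latsolve [:: p; q; x]. Qed.
Lemma med_in p q x : p <= x -> x <= q -> med p x q = x.
Proof. latsolve [:: p; q; x]. Qed.
Lemma med_mono p q x y : x <= y -> med p x q <= med p y q.
Proof. latsolve [:: p; q; x; y]. Qed.
Lemma med_bt x : med \bot x \top = x.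
Proof. by apply: med_in; [exact: le0x | exact: lex1]. Qed.

Lemma opform_le a b c e x y : a <= c -> c <= b -> a <= e -> e <= b ->
  med a x b <= med a y b ->
  med (med a x b) e (med a y b) = Cl a b (B c e x y).
Proof. rewrite /Cl /B. latsolve [:: a; b; c; e; x; y]. Qed.
Lemma opform_ge a b c e x y : a <= c -> c <= b -> a <= e -> e <= b ->
  med a y b <= med a x b ->
  med (med a y b) c (med a x b) = Cl a b (B c e x y).
Proof. rewrite /Cl /B. latsolve [:: a; b; c; e; x; y]. Qed.

Lemma bigbounds (x1 : X) (t : seq X) :
  [/\ \meet_(x <- x1 :: t) x <= x1, x1 <= \join_(x <- x1 :: t) x,
      \meet_(x <- x1 :: t) x <= last x1 t & last x1 t <= \join_(x <- x1 :: t) x].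
Proof.
elim/last_ind: t => [|t y [h1 h2 h3 h4]].
  by rewrite big_seq1 big_seq1 /=.
rewrite -rcons_cons !big_rcons /= last_rcons.
move: (\meet_(x <- x1 :: t) x) (\join_(x <- x1 :: t) x) h1 h2 => m M h1 h2.
split; move: h1 h2; latsolve [:: m; M; x1; y].
Qed.
End Lat.


Section P.
Variables (d : Order.disp_t) (X : tbOrderType d).
Implicit Types (a b c e x y u v p q w : X).

Definition gl c e w (t : seq X) := foldl (B c e) w t.
Definition gs c e (s : seq X) := if s is x1 :: t then gl c e x1 t else \bot.

Lemma gl_B c e w u ts : gl c e (B c e w u) ts = B c e w (gl c e u ts).
Proof.
elim: ts w u => [|z ts IH] w u //=.
by rewrite /gl /= -/(gl c e _ ts) Bassoc IH.
Qed.

Lemma G_gl c e x1 (t : seq X) :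
  (c `&` x1) `|` med (\meet_(x <- x1 :: t) x) (c `&` e) (\join_(x <- x1 :: t) x)
     `|` (e `&` last x1 t) = gl c e x1 t.
Proof.
elim/last_ind: t => [|t y IH].
  by rewrite !big_seq1 /= G1.
have [h1 h2 h3 h4] := bigbounds x1 t.
rewrite /gl foldl_rcons -/(gl c e x1 t) -IH -rcons_cons !big_rcons /= last_rcons.
exact: Grcons.
Qed.

Lemma gl_nseq c e v n : gl c e v (nseq n v) = v.
Proof. by elim: n => //= n IH; rewrite /gl /= Bxx. Qed.

Lemma gl_congr a b c e w w' (z : seq X) : a <= c -> c <= b -> a <= e -> e <= b ->
  Cl a b w = Cl a b w' -> Cl a b (gl c e w z) = Cl a b (gl c e w' z).
Proof.
move=> h1 h2 h3 h4; elim: z w w' => [|y z IH] w w' //= hw.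
apply: IH; rewrite -(CB_l _ _ h1 h2 h3 h4) hw.
by rewrite (CB_l _ _ h1 h2 h3 h4).
Qed.

Definition MF (f : X -> X) := exists p q, p <= q /\ forall x, f x = med p x q.

Lemma MF_id : MF id.
Proof. by exists \bot, \top; split; [exact: le0x | move=> x; rewrite med_bt]. Qed.

Lemma MF_Bl c e (f : X -> X) v : MF f -> MF (fun x => B c e (f x) v).
Proof.
move=> [p [q [pq hf]]]; exists (B c e p v), (B c e q v); split; first exact: B_mono_l.
by move=> x; rewrite hf B_med_l.
Qed.

Lemma MF_Br c e (f : X -> X) w : MF f -> MF (fun x => B c e w (f x)).
Proof.
move=> [p [q [pq hf]]]; exists (B c e w p), (B c e w q); split; first exact: B_mono_r.
by move=> x; rewrite hf B_med_r.
Qed.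

Lemma MF_C a b (f : X -> X) : a <= b -> MF f -> MF (fun x => Cl a b (f x)).
Proof.
move=> ab [p [q [pq hf]]]; exists (Cl a b p), (Cl a b q); split; first exact: C_mono.
by move=> x; rewrite hf C_med.
Qed.

Lemma MF_gl c e (f : X -> X) z : MF f -> MF (fun x => gl c e (f x) z).
Proof.
elim: z f => [|y z IH] f hf //=.
exact: (IH (fun x => B c e (f x) y) (MF_Bl _ _ _ hf)).
Qed.

Lemma MF_mono (f : X -> X) x x' : MF f -> x <= x' -> f x <= f x'.
Proof. by move=> [p [q [pq hf]]] xx; rewrite !hf med_mono. Qed.

Lemma MF_conv (f : X -> X) : MF f -> convex_set (fun t => exists x, f x = t).
Proof.
move=> [p [q [pq hf]]] s1 s2 t [x1 <-] [x2 <-] h1 h2; exists t.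
rewrite hf med_in //.
  by apply: le_trans (ltW h1); rewrite hf med_lo.
by apply: le_trans (ltW h2) _; rewrite hf med_hi.
Qed.

Lemma MF_ext (f g : X -> X) : (forall x, f x = g x) -> MF g -> MF f.
Proof. by move=> fg [p [q [pq hg]]]; exists p, q; split => // x; rewrite fg. Qed.

Lemma MF_sec c e (y z : seq X) : MF (fun x => gs c e (y ++ x :: z)).
Proof.
case: y => [|y1 ys] /=.
  apply: (@MF_ext _ (fun x => gl c e (id x) z)) => //.
  by apply: MF_gl; exact: MF_id.
apply: (@MF_ext _ (fun x => gl c e (B c e (gl c e y1 ys) x) z)).
  by move=> x; rewrite /gl foldl_cat.
apply: MF_gl; apply: (@MF_ext _ (fun x => B c e (gl c e y1 ys) (id x))) => //.
by apply: MF_Br; exact: MF_id.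
Qed.
End P.

Section III_II.
Variables (d : Order.disp_t) (X : tbOrderType d) (H : seq X -> option X).

Lemma iii_ii : eps_standard H -> condition_iii H -> condition_ii H.
Proof.
move=> [H0 _] [a [b [c [e [hace hceb hH]]]]].
move: hace; rewrite lexI => /andP [h1 h3].
move: hceb; rewrite leUx => /andP [h2 h4].
have ab : a <= b by exact: le_trans h1 h2.
have HS : forall s, s <> [::] -> H s = Some (Cl a b (gs c e s)).
  by case=> [//|x1 t] _; rewrite hH G_gl.
have HSc : forall y x z, H (y ++ x :: z) = Some (Cl a b (gs c e (y ++ x :: z))).
  by move=> y x z; apply: HS; case: y.
have MFs : forall y z, MF (fun x => Cl a b (gs c e (y ++ x :: z))).
  by move=> y z; apply: MF_C => //; exact: MF_sec.
split.
- move=> x y z; case: y => [|y1 ys].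
    by rewrite H0.
  rewrite (HS (y1 :: ys)) //= /otup.
  case: x => [|x1 xs] /=.
    rewrite HS; last by case: z.
    rewrite (HS (_ :: _)) // /= /gl foldl_cat -/(gl c e y1 ys) -/(gl c e _ z).
    congr Some; apply: gl_congr => //; by rewrite CC.
  rewrite HS // (HS (x1 :: _)) //=.
  rewrite /gl !foldl_cat /= -/(gl c e x1 xs) -/(gl c e _ ys) -/(gl c e _ z).
  rewrite -/(gl c e _ (ys ++ z)) /gl foldl_cat -/(gl c e _ ys) -/(gl c e _ z).
  rewrite gl_B.
  congr Some; apply: gl_congr => //; by rewrite CB_r.
- move=> v [s [sn hs]] k k0.
  move: hs; rewrite HS // => -[<-].
  case: k k0 => // k _; rewrite HS //= gl_nseq CC //.
- move=> y z x x' v v' xx; rewrite !HSc => -[<-] [<-].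
  exact: MF_mono (MFs y z) xx.
- move=> y z s1 s2 t [x1 hx1] [x2 hx2] l1 l2.
  rewrite HSc in hx1; rewrite HSc in hx2; case: hx1 => hx1; case: hx2 => hx2.
  have [x hx] := MF_conv (MFs y z) (ex_intro _ x1 hx1) (ex_intro _ x2 hx2) l1 l2.
  by exists x; rewrite HSc hx.
Qed.
End III_II.


Section II_I.
Variables (d : Order.disp_t) (X : tbOrderType d) (H : seq X -> option X).

Lemma ii_i : condition_ii H -> condition_i H.
Proof.
move=> [hA hR hM hC]; split => //.
- move=> x v hx; apply: (hR v _ 2) => //; by exists [:: x].
- split.
  + by move=> x x' v v' xx h h'; exact: (hM [::] [::] x x').
  + by move=> x x' z v v' xx h h'; exact: (hM [::] [:: z] x x').
  + by move=> x x' z v v' xx h h'; exact: (hM [:: z] [::] x x').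
Qed.
End II_I.

Section I_III.
Variables (d : Order.disp_t) (X : tbOrderType d) (H : seq X -> option X).
Hypothesis Heps : eps_standard H.
Hypothesis Hi : condition_i H.
Implicit Types (x y z t u v w : X).

Definition h x := odflt \bot (H [:: x]).
Definition op x y := odflt \bot (H [:: x; y]).

Lemma Hsome s : s <> [::] -> H s = Some (odflt \bot (H s)).
Proof. by move=> sn; case: Heps => _ /(_ s sn); case: (H s). Qed.

Lemma Hs1 x : H [:: x] = Some (h x). Proof. exact: Hsome. Qed.
Lemma Hs2 x y : H [:: x; y] = Some (op x y). Proof. exact: Hsome. Qed.

Let hA : associative_op H. Proof. by case: Hi. Qed.

Lemma hh x : h (h x) = h x.
Proof. have := hA [::] [:: x] [::]; rewrite /= Hs1 /= Hs1 => -[]; done. Qed.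

Lemma op_hl x y : op (h x) y = op x y.
Proof. have := hA [::] [:: x] [:: y]; rewrite /= Hs1 /= !Hs2 => -[]; done. Qed.
Lemma op_hr x y : op x (h y) = op x y.
Proof. have := hA [:: x] [:: y] [::]; rewrite /= Hs1 /= !Hs2 => -[]; done. Qed.
Lemma h_op x y : h (op x y) = op x y.
Proof. have := hA [::] [:: x; y] [::]; rewrite /= Hs2 /= Hs1 => -[]; done. Qed.
Lemma op_assoc x y z : op (op x y) z = op x (op y z).
Proof.
have := hA [::] [:: x; y] [:: z]; rewrite /= Hs2 /= Hs2 => e1.
have := hA [:: x] [:: y; z] [::]; rewrite /= Hs2 /= Hs2 e1 => -[].
done.
Qed.

Lemma H_rcons s y : s <> [::] -> H (rcons s y) = Some (op (odflt \bot (H s)) y).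
Proof.
move=> sn; have := hA [::] s [:: y]; rewrite /= cats1 => ->.
by rewrite (Hsome sn) /= Hs2.
Qed.

Lemma h_mono x x' : x <= x' -> h x <= h x'.
Proof. case: Hi => _ _ [m1 _ _] _ xx; exact: (m1 x x' _ _ xx (Hs1 x) (Hs1 x')). Qed.
Lemma op_mono_l x x' z : x <= x' -> op x z <= op x' z.
Proof. case: Hi => _ _ [_ m2 _] _ xx; exact: (m2 x x' z _ _ xx (Hs2 x z) (Hs2 x' z)). Qed.
Lemma op_mono_r x x' z : x <= x' -> op z x <= op z x'.
Proof. case: Hi => _ _ [_ _ m3] _ xx; exact: (m3 x x' z _ _ xx (Hs2 z x) (Hs2 z x')). Qed.

Definition aa := h \bot.
Definition bb := h \top.

Lemma h_lo x : aa <= h x. Proof. exact/h_mono/le0x. Qed.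
Lemma h_hi x : h x <= bb. Proof. exact/h_mono/lex1. Qed.

Lemma fixconv (S : X -> Prop) (g : X -> X) lo hi t : convex_set S -> S lo -> S hi ->
  (forall t, S t -> g t = t) -> lo <= t -> t <= hi -> g t = t.
Proof.
move=> cS Slo Shi gS; rewrite le_eqVlt => /orP [/eqP <-|l1]; first by move=> _; apply: gS.
rewrite le_eqVlt => /orP [/eqP ->|l2]; first by apply: gS.
by apply: gS; apply: (cS lo hi).
Qed.

Lemma h_id t : aa <= t -> t <= bb -> h t = t.
Proof.
case: Hi => _ _ _ [c1 _ _]; apply: (fixconv (S := section_set H [::] [::])) => //.
- by exists \bot; rewrite /= Hs1.
- by exists \top; rewrite /= Hs1.
- by move=> u [w]; rewrite /= Hs1 => -[<-]; rewrite hh.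
Qed.

Lemma h_med x : h x = med aa x bb.
Proof.
have ab : aa <= bb by exact: h_hi.
case: (leP x aa) => xa.
  rewrite (@le_anti _ _ (h x) aa) ?h_lo ?andbT.
    by move: xa ab; latsolve [:: aa; x; bb].
  by rewrite -[X in _ <= X]hh; apply: h_mono.
case: (leP bb x) => bx.
  rewrite (@le_anti _ _ (h x) bb) ?h_hi //.
    by move: bx ab; latsolve [:: aa; x; bb].
  by rewrite -[X in X <= _]hh; apply: h_mono.
by rewrite h_id ?ltW // med_in ?ltW.
Qed.

Lemma op_lo x y : aa <= op x y. Proof. by rewrite -h_op h_lo. Qed.
Lemma op_hi x y : op x y <= bb. Proof. by rewrite -h_op h_hi. Qed.

Lemma op_idem t : aa <= t -> t <= bb -> op t t = t.
Proof.
move=> l1 l2; case: Hi => _ hb _ _.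
have := hb t t; rewrite Hs1 h_id // Hs2 => /(_ erefl) [] //.
Qed.

Definition cc := op bb aa.
Definition ee := op aa bb.

Lemma ab_le : aa <= bb. Proof. exact: h_hi. Qed.
Lemma aa_idem : op aa aa = aa. Proof. by rewrite op_idem // ab_le. Qed.
Lemma bb_idem : op bb bb = bb. Proof. by rewrite op_idem // ab_le. Qed.

Lemma fix1 t : ee <= t -> t <= bb -> op t bb = t.
Proof.
case: Hi => _ _ _ [_ c2 _]; apply: (fixconv (S := section_set H [::] [:: bb]) (g := fun t => op t bb)) => //.
- by exists aa; rewrite /= Hs2.
- by exists bb; rewrite /= Hs2 bb_idem.
- by move=> u [w]; rewrite /= Hs2 => -[<-]; rewrite op_assoc bb_idem.
Qed.
Lemma fix2 t : aa <= t -> t <= ee -> op aa t = t.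
Proof.
case: Hi => _ _ _ [_ _ c3]; apply: (fixconv (S := section_set H [:: aa] [::]) (g := fun t => op aa t)) => //.
- by exists aa; rewrite /= Hs2 aa_idem.
- by exists bb; rewrite /= Hs2.
- by move=> u [w]; rewrite /= Hs2 => -[<-]; rewrite -op_assoc aa_idem.
Qed.
Lemma fix3 t : cc <= t -> t <= bb -> op bb t = t.
Proof.
case: Hi => _ _ _ [_ _ c3]; apply: (fixconv (S := section_set H [:: bb] [::]) (g := fun t => op bb t)) => //.
- by exists aa; rewrite /= Hs2.
- by exists bb; rewrite /= Hs2 bb_idem.
- by move=> u [w]; rewrite /= Hs2 => -[<-]; rewrite -op_assoc bb_idem.
Qed.
Lemma fix4 t : aa <= t -> t <= cc -> op t aa = t.
Proof.
case: Hi => _ _ _ [_ c2 _]; apply: (fixconv (S := section_set H [::] [:: aa]) (g := fun t => op t aa)) => //.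
- by exists aa; rewrite /= Hs2 aa_idem.
- by exists bb; rewrite /= Hs2.
- by move=> u [w]; rewrite /= Hs2 => -[<-]; rewrite op_assoc aa_idem.
Qed.

Lemma ee_lo : aa <= ee. Proof. exact: op_lo. Qed.
Lemma ee_hi : ee <= bb. Proof. exact: op_hi. Qed.
Lemma cc_lo : aa <= cc. Proof. exact: op_lo. Qed.
Lemma cc_hi : cc <= bb. Proof. exact: op_hi. Qed.

Lemma antisym x y : x <= y -> y <= x -> x = y.
Proof. by move=> h1 h2; apply/eqP; rewrite eq_le h1 h2. Qed.

Lemma opA1 u v : ee <= u -> u <= v -> v <= bb -> op u v = u.
Proof.
move=> h1 h2 h3; have hu : aa <= u := le_trans ee_lo h1.
apply: antisym.
  by rewrite -[X in _ <= X](fix1 h1 (le_trans h2 h3)); apply: op_mono_r.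
by rewrite -[X in X <= _](op_idem hu (le_trans h2 h3)); apply: op_mono_r.
Qed.
Lemma opA2 u v : aa <= u -> u <= v -> v <= ee -> op u v = v.
Proof.
move=> h1 h2 h3; have hv : v <= bb := le_trans h3 ee_hi.
apply: antisym.
  by rewrite -[X in _ <= X](op_idem (le_trans h1 h2) hv); apply: op_mono_l.
by rewrite -[X in X <= _](fix2 (le_trans h1 h2) h3); apply: op_mono_l.
Qed.
Lemma opA3 u v : aa <= u -> u <= ee -> ee <= v -> v <= bb -> op u v = ee.
Proof.
move=> h1 h2 h3 h4; apply: antisym.
  by rewrite -[X in _ <= X](opA1 (lexx ee) h3 h4); apply: op_mono_l.
by rewrite -[X in X <= _](opA2 h1 h2 (lexx ee)); apply: op_mono_r.
Qed.
Lemma opB1 u v : cc <= v -> v <= u -> u <= bb -> op u v = v.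
Proof.
move=> h1 h2 h3; have hv : aa <= v := le_trans cc_lo h1.
apply: antisym.
  by rewrite -[X in _ <= X](fix3 h1 (le_trans h2 h3)); apply: op_mono_l.
by rewrite -[X in X <= _](op_idem hv (le_trans h2 h3)); apply: op_mono_l.
Qed.
Lemma opB2 u v : aa <= v -> v <= u -> u <= cc -> op u v = u.
Proof.
move=> h1 h2 h3; have hu : u <= bb := le_trans h3 cc_hi.
apply: antisym.
  by rewrite -[X in _ <= X](op_idem (le_trans h1 h2) hu); apply: op_mono_r.
by rewrite -[X in X <= _](fix4 (le_trans h1 h2) h3); apply: op_mono_r.
Qed.
Lemma opB3 u v : aa <= v -> v <= cc -> cc <= u -> u <= bb -> op u v = cc.
Proof.
move=> h1 h2 h3 h4; apply: antisym.
  by rewrite -[X in _ <= X](opB1 (lexx cc) h3 h4); apply: op_mono_r.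
by rewrite -[X in X <= _](opB2 h1 h2 (lexx cc)); apply: op_mono_l.
Qed.

Lemma opform x y : op x y = Cl aa bb (B cc ee x y).
Proof.
rewrite -op_hl -op_hr !h_med.
have hx1 : aa <= med aa x bb by rewrite -h_med h_lo.
have hx2 : med aa x bb <= bb by rewrite -h_med h_hi.
have hy1 : aa <= med aa y bb by rewrite -h_med h_lo.
have hy2 : med aa y bb <= bb by rewrite -h_med h_hi.
have l1 := ee_lo; have l2 := ee_hi; have l3 := cc_lo; have l4 := cc_hi.
case: (leP (med aa x bb) (med aa y bb)) => uv.
  rewrite -opform_le //.
  move: (med aa x bb) (med aa y bb) hx1 hx2 hy1 hy2 uv => u v hu1 hu2 hv1 hv2 uv.
  case: (leP ee u) => eu.
    by rewrite opA1 //; move: eu uv; latsolve [:: u; ee; v].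
  case: (leP v ee) => ve.
    by rewrite opA2 //; move: ve uv; latsolve [:: u; ee; v].
  rewrite (opA3 hu1 (ltW eu) (ltW ve) hv2); move: (ltW eu) (ltW ve); latsolve [:: u; ee; v].
rewrite -opform_ge //; last exact: ltW.
move: (med aa x bb) (med aa y bb) hx1 hx2 hy1 hy2 uv => u v hu1 hu2 hv1 hv2 /ltW uv.
case: (leP cc v) => cv.
  by rewrite opB1 //; move: cv uv; latsolve [:: v; cc; u].
case: (leP u cc) => uc.
  by rewrite opB2 //; move: uc uv; latsolve [:: v; cc; u].
rewrite (opB3 hv1 (ltW cv) (ltW uc) hu2); move: (ltW cv) (ltW uc); latsolve [:: v; cc; u].
Qed.

Lemma i_iii : condition_iii H.
Proof.
exists aa, bb, cc, ee; split.
- by rewrite lexI cc_lo ee_lo.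
- by rewrite leUx cc_hi ee_hi.
move=> x1 t; rewrite G_gl.
elim/last_ind: t => [|t y IH].
  by rewrite Hs1 h_med.
rewrite -rcons_cons H_rcons // IH /= opform /gl foldl_rcons -/(gl cc ee x1 t).
by rewrite CB_l ?cc_lo ?cc_hi ?ee_lo ?ee_hi.
Qed.
End I_III.

Unset Implicit Arguments.
Theorem proposition5p7 (d : Order.disp_t) (X : tbOrderType d) (H : seq X -> option X) :
  eps_standard H ->
  [<-> condition_i H; condition_ii H; condition_iii H].
Proof.
move=> He; split; first by move=> h; exact: (iii_ii He (i_iii He h)).
split; first by move=> h; exact: (i_iii He (ii_i h)).
by move=> h; exact: (ii_i (iii_ii He h)).
Qed.
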